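(* Let $p$ be an odd prime, $q$ an odd positive integer, and $a\in(\mathbb{Z}/pq\mathbb{Z})^*$ such that $a\bmod p$ generates $(\mathbb{Z}/p\mathbb{Z})^*$ and $a^{(p-1)/2}\equiv-1\pmod{pq}$. Suppose $q$ has a prime divisor $\ell\ge5$ which is a Fermat prime (i.e. of the form $2^{2^m}+1$) and a prime divisor $\ell'\equiv3\pmod 4$. Then $|S_{pq}(a)\cap(S_{pq}(a)+1)|=0$.
   Context: $S_{pq}(a)=\{a^j:0\le j<p-1\}\subseteq\mathbb{Z}/pq\mathbb{Z}$ and $S+1=\{s+1:s\in S\}$. *)

(* Defs.v *)
From mathcomp Require Import all_boot all_order all_algebra.
Set Implicit Arguments. Unset Strict Implicit. Unset Printing Implicit Defensive.
Import GRing.Theory.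
Local Open Scope ring_scope.

Definition Spq (p q : nat) (a : 'Z_(p * q)) : {set 'Z_(p * q)} :=
  [set a ^+ (val j) | j : 'I_(p.-1)].

Definition shift1 (n : nat) (S : {set 'Z_n}) : {set 'Z_n} :=
  [set s + 1 | s in S].

Definition fermat_prime (l : nat) : Prop :=
  prime l /\ exists m : nat, l = (2 ^ (2 ^ m)).+1.

(* Main.v *)
Require Import Defs.
From mathcomp Require Import all_boot all_order all_algebra all_field.
From mathcomp Require Import zify ring.
Set Implicit Arguments. Unset Strict Implicit. Unset Printing Implicit Defensive.
Import GRing.Theory.
Local Open Scope ring_scope.

Section Morph.
Variables (m r : nat).
Hypotheses (m1 : (1 < m)%N) (pr : prime r) (rm : (r %| m)%N).
Definition fZ (x : 'Z_m) : 'F_r := (nat_of_ord x)%:R.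

Lemma Zval (x : 'Z_m) : x = (nat_of_ord x)%:R.
Proof.
apply: ord_inj; have := val_Zp_nat m1 (nat_of_ord x); rewrite modn_small => [H|]; first by rewrite H.
by case: x => i Hi /=; rewrite Zp_cast in Hi.
Qed.

Lemma fZnat n : fZ n%:R = n%:R.
Proof.
rewrite /fZ (_ : nat_of_ord _ = n %% m)%N; last exact: val_Zp_nat.
rewrite {2}(divn_eq n m) natrD natrM.
have -> : (m%:R : 'F_r) = 0.
  by move: rm => /dvdnP [k ->]; rewrite natrM -(Fp_nat_mod pr r) modnn mulr0.
by rewrite mulr0 add0r.
Qed.

Lemma fZM x y : fZ (x * y) = fZ x * fZ y.
Proof. by rewrite {1}(Zval x) {1}(Zval y) -natrM fZnat natrM. Qed.
Lemma fZD x y : fZ (x + y) = fZ x + fZ y.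
Proof. by rewrite {1}(Zval x) {1}(Zval y) -natrD fZnat natrD. Qed.
Lemma fZ1 : fZ 1 = 1.
Proof. by have := fZnat 1; rewrite !mulr1n. Qed. Lemma fZ0 : fZ 0 = 0.
Proof. by have := fZnat 0; rewrite !mulr0n. Qed.
Lemma fZN x : fZ (- x) = - fZ x.
Proof. by apply/eqP; rewrite -subr_eq0 opprK -fZD addNr fZ0. Qed.
Lemma fZX x k : fZ (x ^+ k) = fZ x ^+ k.
Proof. by elim: k => [|k IH]; rewrite ?expr0 ?fZ1 // !exprS fZM IH. Qed.
End Morph.

Lemma Fp_nat0 r n : prime r -> ((n%:R : 'F_r) = 0) -> (r %| n)%N.
Proof. by move=> pr H; have := val_Fp_nat pr n; rewrite H /= => /esym/eqP. Qed.

Lemma Fp_nat0_le r n : prime r -> (0 < n < r)%N -> (n%:R : 'F_r) != 0.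
Proof.
move=> pr /andP[n0 nr]; apply/eqP => /(Fp_nat0 pr) /dvdn_leq.
by rewrite n0 leqNgt nr => /(_ isT).
Qed.

Lemma fermatF r (c : 'F_r) : prime r -> c != 0 -> c ^+ r.-1 = 1.
Proof.
move=> pr c0; have := expf_card c; rewrite card_Fp //.
have r1 := prime_gt1 pr.
move=> H; rewrite -[X in c ^+ X = _](ltn_predK r1) exprS in H.
by move/eqP: H; rewrite -{3}[c]mulr1 => /eqP/(mulfI c0).
Qed.


Lemma key1 r (A : 'F_r) n : prime r -> (r %% 4 = 3)%N -> A ^+ n = -1 -> odd n.
Proof.
move=> pr r4 An; apply/negP => /negP ev.
have r1 := prime_gt1 pr.
set c := A ^+ n./2.
have c2 : c ^+ 2 = -1.
  by rewrite /c -exprM -An; congr (_ ^+ _); rewrite -[in RHS](odd_double_half n) (negbTE ev) add0n -muln2 mulnC.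
have c0 : c != 0.
  apply/eqP => c0; move: c2; rewrite c0 expr0n /= => /eqP; rewrite eq_sym oppr_eq0 oner_eq0 //.
have := fermatF pr c0.
have -> : r.-1 = (2 * (2 * (r %/ 4) + 1))%N.
  rewrite {1}(divn_eq r 4) r4; lia.
rewrite exprM c2 -signr_odd oddD oddM /= => /eqP.
rewrite expr1 -subr_eq0 -opprD oppr_eq0 -mulr2n => /eqP /(Fp_nat0 pr) /dvdn_leq r2.
have : r = 2%N by lia.
by move=> rE; rewrite rE in r4.
Qed.

Lemma two_ne0 l : prime l -> (3 <= l)%N -> (1 : 'F_l) != -1.
Proof.
move=> pl l3; apply/eqP; move/eqP; rewrite -subr_eq0 opprK -mulr2n => /eqP.
by move/(Fp_nat0 pl)/dvdn_leq => /(_ isT); lia.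
Qed.

Lemma key2 l e (A : 'F_l) n : prime l -> l = (2 ^ e).+1 -> (5 <= l)%N ->
  A ^+ n = -1 -> odd n -> A = -1.
Proof.
move=> pl lE l5 An on.
have A0 : A != 0.
  apply/eqP=> A0; move: An; rewrite A0 expr0n.
  case: n on => // n _ /= /eqP; rewrite eq_sym oppr_eq0 oner_eq0 //.
have cop : coprime (2 ^ e) n.
  case: e lE => [|e] lE; first by rewrite expn0 /coprime gcd1n.
  by rewrite coprime_pexpl // coprime2n.
have F : A ^+ (2 ^ e) = 1.
  have -> : (2 ^ e)%N = l.-1 by rewrite lE.
  exact: fermatF.
have [u _ hu] := Bezoutl n (expn_gt0 2 e).
move: cop; rewrite /coprime => /eqP g1; rewrite g1 in hu.
have [k hk] := dvdnP hu.
have : A ^+ (1 + u * n) = 1 by rewrite hk mulnC exprM F expr1n.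
rewrite exprD expr1 mulnC exprM An -signr_odd.
case: (odd u) => /=; first by rewrite expr1 mulrN1 => /eqP; rewrite eqr_oppLR => /eqP.
rewrite expr0 mulr1 => A1; move: An; rewrite A1 expr1n => /eqP.
by rewrite (negbTE (two_ne0 pl _)) //; lia.
Qed.

Theorem mainTheorem10 (p q : nat) (a : 'Z_(p * q)) :
  prime p -> odd p -> odd q -> (0 < q)%N ->
  a \is a GRing.unit ->
  (* a mod p generates (Z/pZ)^* *)
  (forall x : 'F_p, x != 0 -> exists k : nat, ((val a)%:R : 'F_p) ^+ k = x) ->
  a ^+ (p.-1 %/ 2) = -1 ->
  (exists l : nat, fermat_prime l /\ (5 <= l)%N /\ (l %| q)%N) ->
  (exists l' : nat, prime l' /\ (l' %| q)%N /\ l' %% 4 = 3)%N ->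
  #|Spq a :&: shift1 (Spq a)| = 0%N.
Proof.
move=> pp op oq q0 _ _ an [l [[pl [e lE]] [l5 lq]]] [l' [pl' [l'q l'4]]].
have m1 : (1 < p * q)%N by have := prime_gt1 pp; nia.
have l'm : (l' %| p * q)%N by rewrite dvdn_mull.
have lm : (l %| p * q)%N by rewrite dvdn_mull.
have on : odd (p.-1 %/ 2).
  apply: (key1 (A := fZ l' a) pl' l'4).
  by rewrite -fZX // an fZN // fZ1.
have A1 : fZ l a = -1.
  apply: (key2 pl lE l5 _ on).
  by rewrite -fZX // an fZN // fZ1.
apply: eq_card0 => x; rewrite !inE; apply/negbTE/andP => -[].
rewrite /Spq /shift1 => /imsetP [i _ ->] /imsetP [y /imsetP [j _ ->]] /(congr1 (fZ l)).
rewrite fZD // !fZX // fZ1 // A1 -signr_odd -[(-1) ^+ j]signr_odd.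
have l3 : (3 <= l)%N by lia.
case: (odd i); case: (odd j); rewrite /= ?expr1 ?expr0 => /eqP.
- by rewrite addNr oppr_eq0 oner_eq0.
- rewrite -subr_eq0 -opprD oppr_eq0 -mulr2n -mulrS => /eqP /(Fp_nat0 pl) /dvdn_leq => /(_ isT) l3'; by have := leq_trans l5 l3'.
- by rewrite addNr oner_eq0.
- by rewrite -subr_eq0 opprD addrA subrr add0r oppr_eq0 oner_eq0.
Qed.
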